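(* Let $m\in\{1,2\}$, $\gamma\in[2,3]$ and $z\in(0,z_M]$. Then the solution of $\frac{dC}{dV}=\frac{F(V,C;\gamma,z)}{G(V,C;\gamma,z)}$ on $[V_1,-\sqrt{2/\gamma}\,C_8(z))$ with $C(V_1)=C_1$ satisfies $C(V)>-\sqrt{\gamma/2}\,V$ for all $V\in(V_1,-\sqrt{2/\gamma}\,C_8(z))$ (and $C_1\ge-\sqrt{\gamma/2}V_1$ with equality only at $\gamma=2$).
   Context: Fix $m\in\{1,2\}$. For $z>0$ put $\lambda=1+m\gamma z$, $a_1=1+\frac{m(\gamma-1)}{2}$, $a_2=\frac{m(\gamma-1)+mz\gamma(\gamma-3)}{2}$, $a_3=\frac{mz\gamma(\gamma-1)}{2}$, $G(V,C;\gamma,z)=C^2[(m+1)V+2mz]-V(1+V)(\lambda+V)$, $F(V,C;\gamma,z)=C\{C^2[1+\frac{mz}{1+V}]-a_1(1+V)^2+a_2(1+V)-a_3\}$. $V_1=-\frac2{\gamma+1}$, $C_1=\frac{\sqrt{2\gamma(\gamma-1)}}{\gamma+1}$. $z_M=(\sqrt\gamma+\sqrt2)^{-2}$, $w(z)=\sqrt{1-2(\gamma+2)z+(\gamma-2)^2z^2}$, $V_8=\frac{-1+(\gamma-2)z+w}{2}$, $C_8=1+V_8$. *)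

(* Defs.v *)
From Stdlib Require Import Reals.
From Coquelicot Require Import Coquelicot.
Open Scope R_scope.

Definition lam (m g z : R) : R := 1 + m * g * z.
Definition a1 (m g : R) : R := 1 + m * (g - 1) / 2.
Definition a2 (m g z : R) : R := (m * (g - 1) + m * z * g * (g - 3)) / 2.
Definition a3 (m g z : R) : R := m * z * g * (g - 1) / 2.

Definition Gf (m g z V C : R) : R :=
  C ^ 2 * ((m + 1) * V + 2 * m * z) - V * (1 + V) * (lam m g z + V).

Definition Ff (m g z V C : R) : R :=
  C * (C ^ 2 * (1 + m * z / (1 + V)) - a1 m g * (1 + V) ^ 2
       + a2 m g z * (1 + V) - a3 m g z).

Definition V1g (g : R) : R := - (2 / (g + 1)).
Definition C1g (g : R) : R := sqrt (2 * g * (g - 1)) / (g + 1).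

Definition zM (g : R) : R := / (sqrt g + sqrt 2) ^ 2.
Definition wz (g z : R) : R := sqrt (1 - 2 * (g + 2) * z + (g - 2) ^ 2 * z ^ 2).
Definition V8 (g z : R) : R := (-1 + (g - 2) * z + wz g z) / 2.
Definition C8g (g z : R) : R := 1 + V8 g z.

Definition Vend (g z : R) : R := - (sqrt (2 / g) * C8g g z).

Definition is_solution (m g z a b c0 : R) (C : R -> R) : Prop :=
  C a = c0 /\
  filterlim C (at_right a) (locally c0) /\
  (forall V, a < V < b ->
     Gf m g z V (C V) <> 0 /\
     derivable_pt_lim C V (Ff m g z V (C V) / Gf m g z V (C V))).

(* Main.v *)
Require Import Defs.
From Stdlib Require Import Reals Lra Psatz.
From Coquelicot Require Import Coquelicot.
Open Scope R_scope.
Lemma q6 k : 1 <= k -> k <= 5/4 -> 4*k^6+4*k^5-14*k^4-24*k^3-8*k^2+4*k+2 < 0.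
Proof. intros. set (t := k - 1). replace k with (1+t) by (unfold t; ring).
  assert (0 <= t) by (unfold t; lra). assert (t <= 1/4) by (unfold t; lra).
  assert (0 <= t^3 <= 1/64) by (split; [apply pow_le; lra | nra]).
  nra. Qed.
Lemma bc k : 1 <= k -> k <= 5/4 -> 0 < 4*k^7+8*k^6-14*k^5-22*k^4+16*k^3+22*k^2-2*k-4.
Proof. intros. set (t := k - 1). replace k with (1+t) by (unfold t; ring).
  assert (0 <= t) by (unfold t; lra). 
  assert (0 <= t^2) by nra. assert (0 <= t^3) by nra. assert (0<=t^4) by nra. assert (0<=t^5) by nra. assert (0<=t^6) by nra. assert (0<=t^7) by nra.
  nra. Qed.
Lemma q4 k : 1 <= k -> -4*k^4-12*k^3-8*k^2+2*k+2 < 0.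
Proof. intros. nra. Qed.
Lemma f2 k u : 1 <= k -> k <= 5/4 -> 0 <= u -> u <= 1 ->
 4*k^7*u + 8*k^6*u - 8*k^6 - 4*k^5*u^2 - 6*k^5*u - 8*k^5 - 8*k^4*u^2 - 6*k^4*u + 4*k^4 + 4*k^3*u^2 + 8*k^3*u + 4*k^3 + 10*k^2*u^2 + 2*k^2*u - 2*k*u - 2*u^2 <= 0.
Proof. intros. pose proof (q6 k H H0). pose proof (bc k H H0). pose proof (q4 k H).
 assert (E: 4*k^7*u + 8*k^6*u - 8*k^6 - 4*k^5*u^2 - 6*k^5*u - 8*k^5 - 8*k^4*u^2 - 6*k^4*u + 4*k^4 + 4*k^3*u^2 + 8*k^3*u + 4*k^3 + 10*k^2*u^2 + 2*k^2*u - 2*k*u - 2*u^2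
  = (k-1)*(4*k^6+4*k^5-14*k^4-24*k^3-8*k^2+4*k+2) + (u-1)*((4*k^7+8*k^6-14*k^5-22*k^4+16*k^3+22*k^2-2*k-4) - (1-u)*((k-1)*(-4*k^4-12*k^3-8*k^2+2*k+2)))) by ring.
 rewrite E. clear E.
 assert (0 <= (k-1)*-(4*k^6+4*k^5-14*k^4-24*k^3-8*k^2+4*k+2)) by (apply Rmult_le_pos; lra).
 assert (0 <= (1-u)*((k-1)*-(-4*k^4-12*k^3-8*k^2+2*k+2))) by (apply Rmult_le_pos; [lra| apply Rmult_le_pos; lra]).
 nra. Qed.
Lemma f1 k u m : 1 <= k -> k <= 5/4 -> 0 <= u -> u <= 1 -> 1 <= m ->
 0 <= -2*k^5*u*m - 4*k^5*u + 4*k^5*m + 4*k^5 - 2*k^4*u^2*m - 2*k^4*u^2 + 4*k^4*u*m - 2*k^4*u + 4*k^4*m + 8*k^4 + 6*k^3*u*m + 6*k^3*u + 4*k^3 + 2*k^2*u^2*m + 4*k^2*u^2 + 2*k^2*u - 2*k*u - 2*u^2.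
Proof. intros.
 assert (HM: 0 <= -2*k^5*u + 4*k^5 - 2*k^4*u^2 + 4*k^4*u + 4*k^4 + 6*k^3*u + 2*k^2*u^2).
 { assert (0 <= k^5*(2-2*u)) by (apply Rmult_le_pos; [apply pow_le; lra|lra]).
   assert (0 <= k^4*(2*u*(1-u))) by (apply Rmult_le_pos; [apply pow_le; lra|nra]).
   assert (0 <= k^3*u) by (apply Rmult_le_pos; [apply pow_le; lra|lra]).
   assert (0 <= k^4) by (apply pow_le; lra). assert (0 <= k^5) by (apply pow_le; lra). nra. }
 assert (0 <= (m-1)*(-2*k^5*u + 4*k^5 - 2*k^4*u^2 + 4*k^4*u + 4*k^4 + 6*k^3*u + 2*k^2*u^2)) by (apply Rmult_le_pos; lra).
 assert (0 <= k^5*(2-6*u+ 4)) by (apply Rmult_le_pos; [apply pow_le; lra|lra]).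
 assert (0 <= k^4*(4*u*(1-u))) by (apply Rmult_le_pos; [apply pow_le; lra|nra]).
 assert (1 <= k^3) by (rewrite <- (pow1 3); apply pow_incr; lra).
 assert (k^3 <= k^4) by (simpl; nra). assert (k^4 <= k^5) by (simpl; nra).
 assert (0 <= k^3*u) by (apply Rmult_le_pos; lra).
 assert (0 <= k^2*u) by (apply Rmult_le_pos; nra).
 assert (0 <= k^2*u^2) by (apply Rmult_le_pos; nra).
 nra. Qed.

Lemma E1_pos k u z m : 1 <= k -> k <= 5/4 -> 0 <= u -> u <= 1 -> 1 <= m ->
  let c := (k+u)/(1+k) in
  z*(2*k^2 - (2*k^2-2)*c) = c*(1-c) ->
  0 <= (2*k^2*(m+1)-2)/2*c^2 + 2*c*k - k^2*(1 + m*(2*k^2)*z).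
Proof. intros Hk Hk' Hu Hu' Hm c HzD.
 assert (Hc1: c <= 1) by (unfold c; apply Rmult_le_reg_r with (1+k); [lra|]; field_simplify; lra).
 assert (HD: 0 < 2*k^2 - (2*k^2-2)*c) by (assert (0 <= (2*k^2-2)*(1-c)) by (apply Rmult_le_pos; nra); nra).
 assert (E: ((2*k^2*(m+1)-2)/2*c^2 + 2*c*k - k^2*(1 + m*(2*k^2)*z)) * (2*k^2 - (2*k^2-2)*c) * (1+k)^3
   = u * (-2*k^5*u*m - 4*k^5*u + 4*k^5*m + 4*k^5 - 2*k^4*u^2*m - 2*k^4*u^2 + 4*k^4*u*m - 2*k^4*u + 4*k^4*m + 8*k^4 + 6*k^3*u*m + 6*k^3*u + 4*k^3 + 2*k^2*u^2*m + 4*k^2*u^2 + 2*k^2*u - 2*k*u - 2*u^2)).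
 { transitivity ((((2*k^2*(m+1)-2)/2*c^2 + 2*c*k - k^2)*(2*k^2 - (2*k^2-2)*c) - 2*m*k^4*(c*(1-c)))*(1+k)^3).
   { rewrite <- HzD. ring. } unfold c. field. lra. }
 pose proof (f1 k u m Hk Hk' Hu Hu' Hm).
 assert (0 <= u * (-2*k^5*u*m - 4*k^5*u + 4*k^5*m + 4*k^5 - 2*k^4*u^2*m - 2*k^4*u^2 + 4*k^4*u*m - 2*k^4*u + 4*k^4*m + 8*k^4 + 6*k^3*u*m + 6*k^3*u + 4*k^3 + 2*k^2*u^2*m + 4*k^2*u^2 + 2*k^2*u - 2*k*u - 2*u^2)) by (apply Rmult_le_pos; lra).
 rewrite <- E in H0.
 assert (0 < (2*k^2 - (2*k^2-2)*c) * (1+k)^3) by (apply Rmult_lt_0_compat; [lra| apply pow_lt; lra]).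
 rewrite Rmult_assoc in H0.
 apply Rmult_le_reg_r with ((2*k^2 - (2*k^2-2)*c) * (1+k)^3); [lra|]. lra.
Qed.

Lemma E2_neg k u z : 1 <= k -> k <= 5/4 -> 0 <= u -> u <= 1 ->
  let c := (k+u)/(1+k) in let g := 2*k^2 in
  z*(g - (g-2)*c) = c*(1-c) ->
  (2*g-1)*c^2 - (3*g-2-g*z*(g-2))*c*k + ((g-1)+g*z*(3-g))*k^2 <= 0.
Proof. intros Hk Hk' Hu Hu' c g HzD.
 assert (Hc1: c <= 1) by (unfold c; apply Rmult_le_reg_r with (1+k); [lra|]; field_simplify; lra).
 assert (HD: 0 < g - (g-2)*c) by (unfold g; assert (0 <= (2*k^2-2)*(1-c)) by (apply Rmult_le_pos; nra); nra).
 assert (E: ((2*g-1)*c^2 - (3*g-2-g*z*(g-2))*c*k + ((g-1)+g*z*(3-g))*k^2) * (g - (g-2)*c) * (1+k)^3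
   = u * (4*k^7*u + 8*k^6*u - 8*k^6 - 4*k^5*u^2 - 6*k^5*u - 8*k^5 - 8*k^4*u^2 - 6*k^4*u + 4*k^4 + 4*k^3*u^2 + 8*k^3*u + 4*k^3 + 10*k^2*u^2 + 2*k^2*u - 2*k*u - 2*u^2)).
 { transitivity (((2*g-1)*c^2*(g - (g-2)*c) - (3*g-2)*c*k*(g - (g-2)*c) + g*(g-2)*c*k*(c*(1-c)) + (g-1)*k^2*(g - (g-2)*c) + g*(3-g)*k^2*(c*(1-c)))*(1+k)^3).
   { rewrite <- HzD. ring. } unfold c, g. field. lra. }
 pose proof (f2 k u Hk Hk' Hu Hu').
 assert (u * (4*k^7*u + 8*k^6*u - 8*k^6 - 4*k^5*u^2 - 6*k^5*u - 8*k^5 - 8*k^4*u^2 - 6*k^4*u + 4*k^4 + 4*k^3*u^2 + 8*k^3*u + 4*k^3 + 10*k^2*u^2 + 2*k^2*u - 2*k*u - 2*u^2) <= 0) by nra.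
 rewrite <- E in H0.
 assert (0 < (g - (g-2)*c) * (1+k)^3) by (apply Rmult_lt_0_compat; [lra| apply pow_lt; lra]).
 rewrite Rmult_assoc in H0.
 apply Rmult_le_reg_r with ((g - (g-2)*c) * (1+k)^3); [lra|]. lra.
Qed.
Lemma sq_le X Y : 0 <= X -> 0 <= Y -> Y^2 <= X^2 -> Y <= X.
Proof. intros. nra. Qed.

Lemma setup g z : 2 <= g <= 3 -> 0 < z <= zM g ->
  let k := sqrt (g/2) in let c := C8g g z in
  k^2 = g/2 /\ 1 <= k /\ k <= 5/4 /\ sqrt (2/g) = /k /\
  0 <= (1+k)*c - k /\ (1+k)*c - k <= 1 /\ z*(g-(g-2)*c) = c*(1-c) /\
  z <= 1/8 /\ 0 < c.
Proof.
  intros Hg Hz k c.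
  assert (Hk2: k^2 = g/2) by (unfold k; apply pow2_sqrt; lra).
  assert (Hk0: 0 <= k) by (unfold k; apply sqrt_pos).
  assert (Hk1: 1 <= k) by nra.
  assert (Hk5: k <= 5/4) by nra.
  assert (Hs: sqrt (2/g) = /k).
  { unfold k. rewrite <- sqrt_inv. f_equal. field. lra. }
  assert (HzM: zM g = / (2*(k+1)^2)).
  { unfold zM. f_equal.
    assert (sqrt g = sqrt 2 * k) by (unfold k; rewrite <- sqrt_mult by lra; f_equal; field).
    rewrite H. assert (sqrt 2 ^2 = 2) by (apply pow2_sqrt; lra).
    replace ((sqrt 2 * k + sqrt 2)^2) with (sqrt 2^2 * (k+1)^2) by ring. rewrite H0. ring. }
  rewrite HzM in Hz.
  assert (Hz2: 2*(k+1)^2*z <= 1).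
  { destruct Hz as [Hz0 Hz1].
    assert (H: 2*(k+1)^2 * z <= 2*(k+1)^2 * /(2*(k+1)^2)) by (apply Rmult_le_compat_l; nra).
    rewrite Rinv_r in H by nra. exact H. }
  set (d := 1 - 2*(g+2)*z + (g-2)^2*z^2).
  assert (Hd: d = (1 - 2*(k+1)^2*z)*(1 - 2*(k-1)^2*z)).
  { unfold d. replace g with (2*k^2) by lra. ring. }
  assert (Hd0: 0 <= d).
  { rewrite Hd. apply Rmult_le_pos. lra. assert ((k-1)^2 <= (k+1)^2) by nra. nra. }
  set (w := wz g z).
  assert (Hw0: 0 <= w) by (unfold w, wz; apply sqrt_pos).
  assert (Hw2: w^2 = d) by (unfold w, wz; apply pow2_sqrt; exact Hd0).
  assert (Hc: c = (1 + (g-2)*z + w)/2) by (unfold c, C8g, V8; fold w; field).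
  assert (Hz8: z <= 1/8) by nra.
  assert (Hwle: w <= 1 - (g-2)*z).
  { apply sq_le. nra. lra. rewrite Hw2. unfold d. nra. }
  split; [exact Hk2|]. split; [exact Hk1|]. split; [exact Hk5|]. split; [exact Hs|].
  split.
  { assert (Hx: (k-1)*(1 - 2*(k+1)^2*z) <= (1+k)*w).
    { apply sq_le. apply Rmult_le_pos; lra. apply Rmult_le_pos; lra.
      replace (((1+k)*w)^2) with ((1+k)^2*w^2) by ring. rewrite Hw2, Hd.
      assert (0 <= (1 - 2*(k+1)^2*z)*(4*k)) by (apply Rmult_le_pos; lra).
      replace g with (2*k^2) by lra. nra. }
    rewrite Hc. replace g with (2*k^2) by lra. nra. }
  split. { rewrite Hc. nra. }
  split. { rewrite Hc. apply Rminus_diag_uniq.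
    replace (z * (g - (g - 2) * ((1 + (g - 2) * z + w) / 2)) - ((1 + (g - 2) * z + w) / 2) * (1 - (1 + (g - 2) * z + w) / 2)) with ((w^2-d)/4) by (unfold d; field).
    rewrite Hw2. field. }
  split; [exact Hz8|]. rewrite Hc. nra.
Qed.

Lemma dcont h x d : derivable_pt_lim h x d -> forall eps, eps > 0 ->
  exists del, del > 0 /\ forall y, Rabs (y - x) < del -> Rabs (h y - h x) < eps.
Proof.
  intros Hd eps He.
  assert (Hc: continuity_pt h x).
  { apply derivable_continuous_pt. exists d. exact Hd. }
  destruct (Hc eps He) as [alp [Ha Hal]].
  exists alp. split; [lra|]. intros y Hy.
  destruct (Req_dec y x) as [->|Hne].
  - rewrite Rminus_diag, Rabs_R0. lra.
  - apply Hal. split. split. exact I. auto. exact Hy.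
Qed.

Lemma barrier (h h' : R -> R) (a b : R) :
  (forall x, a < x < b -> derivable_pt_lim h x (h' x)) ->
  (forall x, a < x < b -> h x = 0 -> h' x > 0) ->
  (exists del, del > 0 /\ forall x, a < x < a + del -> h x > 0) ->
  forall x, a < x < b -> h x > 0.
Proof.
  intros Hd Hz [del [Hdel Hst]] x0 Hx0.
  destruct (Rlt_or_le 0 (h x0)) as [Hp|Hn]; [exact Hp|exfalso].
  assert (Hx0d: a + del <= x0).
  { destruct (Rlt_or_le x0 (a+del)); [|lra]. pose proof (Hst x0 (conj (proj1 Hx0) H)). lra. }
  set (E := fun t => a < t <= x0 /\ forall r, a < r <= t -> h r > 0).
  assert (HEb: bound E) by (exists x0; intros t [Ht _]; lra).
  assert (HEn: exists t, E t).
  { exists (a + del/2). split. lra. intros r Hr. apply Hst. lra. }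
  destruct (completeness E HEb HEn) as [s [Hs1 Hs2]].
  assert (Hsa: a + del/2 <= s) by (apply Hs1; split; [lra|]; intros r Hr; apply Hst; lra).
  assert (Hsx: s <= x0) by (apply Hs2; intros t [Ht _]; lra).
  assert (HA: forall r, a < r < s -> h r > 0).
  { intros r Hr. destruct (Classical_Prop.classic (exists t, E t /\ r < t)) as [[t [[Ht1 Ht2] Hrt]]|Hno].
    - apply Ht2. lra.
    - exfalso. assert (s <= r). { apply Hs2. intros t Et. destruct (Rle_or_lt t r); [lra|]. exfalso; apply Hno; exists t; auto. } lra. }
  assert (Hsab: a < s < b) by lra.
  pose proof (Hd s Hsab) as Hds.
  destruct (Rtotal_order (h s) 0) as [Hneg|[Hzero|Hpos]].
  - destruct (dcont h s (h' s) Hds (- h s) ltac:(lra)) as [e [He Hc]].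
    set (r := s - Rmin e (s-a) / 2).
    assert (Hmin1: Rmin e (s-a) <= e) by apply Rmin_l.
    assert (Hmin2: Rmin e (s-a) <= s-a) by apply Rmin_r.
    assert (Hmin0: 0 < Rmin e (s-a)) by (apply Rmin_glb_lt; lra).
    assert (Hr: a < r < s) by (unfold r; lra).
    pose proof (HA r Hr).
    assert (Rabs (r - s) < e) by (unfold r; rewrite Rabs_left; lra).
    pose proof (Hc r H0). apply Rabs_def2 in H1. lra.
  - pose proof (Hz s Hsab Hzero) as Hdp.
    destruct (Hds (h' s / 2) ltac:(lra)) as [e He].
    set (eta := - (Rmin e (s-a) / 2)).
    assert (Hmin1: Rmin e (s-a) <= e) by apply Rmin_l.
    assert (Hmin2: Rmin e (s-a) <= s-a) by apply Rmin_r.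
    assert (Hmin0: 0 < Rmin e (s-a)) by (apply Rmin_glb_lt; [destruct e; simpl; lra| lra]).
    assert (Hne: eta <> 0) by (unfold eta; lra).
    assert (Habs: Rabs eta < e) by (unfold eta; rewrite Rabs_left; lra).
    pose proof (He eta Hne Habs) as H1. apply Rabs_def2 in H1.
    assert (Hr: a < s + eta < s) by (unfold eta; lra).
    pose proof (HA _ Hr). rewrite Hzero in H1.
    assert (Hq: (h (s + eta) - 0) / eta > 0) by lra.
    assert (Heta: eta < 0) by (unfold eta; lra).
    assert ((h (s+eta) - 0) / eta < 0).
    { unfold Rdiv. rewrite Rminus_0_r. apply Rmult_pos_neg; [lra| apply Rinv_lt_0_compat; lra]. }
    lra.
  - assert (Hsx': s < x0) by (destruct (Req_dec s x0); [subst; lra | lra]).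
    destruct (dcont h s (h' s) Hds (h s) Hpos) as [e [He Hc]].
    set (t := Rmin (s + e/2) x0).
    assert (Ht1: t <= s + e/2) by apply Rmin_l.
    assert (Ht2: t <= x0) by apply Rmin_r.
    assert (Ht3: s < t) by (apply Rmin_glb_lt; lra).
    assert (E t).
    { split. lra. intros r Hr. destruct (Rlt_or_le r s). apply HA; lra.
      assert (Rabs (r - s) < e) by (rewrite Rabs_right; lra).
      pose proof (Hc r H0). apply Rabs_def2 in H1. lra. }
    pose proof (Hs1 t H). lra.
Qed.

Lemma start_pos (h h' : R -> R) (a del0 : R) :
  del0 > 0 ->
  (forall x, a < x < a + del0 -> derivable_pt_lim h x (h' x) /\ h' x > 0) ->
  (forall eps, eps > 0 -> exists e, e > 0 /\ forall x, a < x < a + e -> Rabs (h x - h a) < eps) ->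
  h a = 0 ->
  forall x, a < x < a + del0 -> h x > 0.
Proof.
  intros Hdel Hd Hlim Ha.
  assert (Hinc: forall y x, a < y < x -> x < a + del0 -> h y < h x).
  { intros y x Hy Hx. destruct (MVT_cor2 h h' y x ltac:(lra)) as [c [Hc1 Hc2]].
    intros c Hc. apply Hd. lra.
    assert (h' c > 0) by (apply Hd; lra). nra. }
  assert (Hnn: forall x, a < x < a + del0 -> 0 <= h x).
  { intros x Hx. destruct (Rle_or_lt 0 (h x)) as [|Hlt]; [assumption|exfalso].
    destruct (Hlim (- h x) ltac:(lra)) as [e [He Hh]].
    set (y := a + Rmin e (x - a) / 2).
    assert (Rmin e (x-a) <= e) by apply Rmin_l.
    assert (Rmin e (x-a) <= x-a) by apply Rmin_r.
    assert (0 < Rmin e (x-a)) by (apply Rmin_glb_lt; lra).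
    pose proof (Hh y ltac:(unfold y; lra)). rewrite Ha in H2. apply Rabs_def2 in H2.
    pose proof (Hinc y x ltac:(unfold y; lra) ltac:(lra)). lra. }
  intros x Hx. pose proof (Hnn ((a+x)/2) ltac:(lra)). pose proof (Hinc ((a+x)/2) x ltac:(lra) ltac:(lra)). lra.
Qed.

Section L.
Variable a : R.
Notation F := (at_right a).
Lemma lim_eps f L : filterlim f F (locally L) -> forall eps, eps > 0 ->
  exists e, e > 0 /\ forall x, a < x < a + e -> Rabs (f x - L) < eps.
Proof.
  intros Hf eps He. apply filterlim_locally with (eps := mkposreal eps He) in Hf.
  destruct Hf as [e He2]. exists e. split. destruct e; simpl; lra.
  intros x Hx. specialize (He2 x). 
  assert (ball a e x). { unfold ball; simpl; unfold AbsRing_ball, abs, minus, plus, opp; simpl. rewrite Rabs_right; lra. }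
  specialize (He2 H ltac:(lra)). unfold ball in He2; simpl in He2; unfold AbsRing_ball, abs, minus, plus, opp in He2; simpl in He2. exact He2.
Qed.
Lemma lim_plus f g A B : filterlim f F (locally A) -> filterlim g F (locally B) -> filterlim (fun x => f x + g x) F (locally (A + B)).
Proof. intros. eapply filterlim_comp_2; eauto. apply (filterlim_Rbar_plus A B (A+B)). reflexivity. Qed.
Lemma lim_mult f g A B : filterlim f F (locally A) -> filterlim g F (locally B) -> filterlim (fun x => f x * g x) F (locally (A * B)).
Proof. intros. eapply filterlim_comp_2; eauto. apply (filterlim_Rbar_mult A B (A*B)). reflexivity. Qed.
Lemma lim_const (A : R) : filterlim (fun _ : R => A) F (locally A).
Proof. apply filterlim_const. Qed.
Lemma lim_id : filterlim (fun x => x) F (locally a).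
Proof. intros P HP. unfold filtermap. destruct HP as [e He]. exists e. intros y Hy _. apply He. exact Hy. Qed.
Lemma lim_opp f A : filterlim f F (locally A) -> filterlim (fun x => - f x) F (locally (- A)).
Proof. intros. replace (-A) with ((-1)*A) by ring. eapply filterlim_ext. 2: apply lim_mult; [apply lim_const|exact H]. intros; simpl; ring. Qed.
Lemma lim_minus f g A B : filterlim f F (locally A) -> filterlim g F (locally B) -> filterlim (fun x => f x - g x) F (locally (A - B)).
Proof. intros. apply lim_plus; auto. apply lim_opp; auto. Qed.
Lemma lim_pow f A n : filterlim f F (locally A) -> filterlim (fun x => f x ^ n) F (locally (A ^ n)).
Proof. intros. induction n. apply lim_const. simpl. apply lim_mult; auto. Qed.
End L.

Ltac lim_tac Hc := repeat first [ apply lim_const | exact Hc | apply lim_id | apply lim_minus | apply lim_plus | apply lim_mult | apply lim_opp | apply lim_pow ].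

Definition Bq (m g z V : R) := (g*(m+1)-2)/2*V^2 - 2*V - lam m g z.
Definition Pq (g z V : R) := (2*g-1)*V^2 + (3*g-2-g*z*(g-2))*V + ((g-1)+g*z*(3-g)).
Definition Nf (m g z k V C : R) := C*(C^2*(1+V+m*z) - a1 m g*(1+V)^3 + a2 m g z*(1+V)^2 - a3 m g z*(1+V)) + k*(1+V)*Gf m g z V C.

Lemma G_line m g z k V : k^2 = g/2 -> Gf m g z V (-(k*V)) = V * Bq m g z V.
Proof. intros Hk. unfold Gf, Bq, lam. replace ((-(k*V))^2) with (k^2*V^2) by ring. rewrite Hk. field. Qed.

Lemma F_line m g z k V : k^2 = g/2 -> 1 + V <> 0 ->
  Ff m g z V (-(k*V)) + k * Gf m g z V (-(k*V)) = k*m*V^2*Pq g z V/(2*(1+V)).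
Proof. intros Hk HV. unfold Ff, Gf, Pq, lam, a1, a2, a3. replace ((-(k*V))^2) with (k^2*V^2) by ring. rewrite Hk. field. auto. Qed.

Lemma N_id m g z k V C : 1 + V <> 0 -> Gf m g z V C <> 0 ->
  Ff m g z V C / Gf m g z V C + k = Nf m g z k V C / ((1+V) * Gf m g z V C).
Proof. intros H1 H2. unfold Nf. unfold Ff at 1. field. auto. Qed.

Lemma N_line m g z k V : k^2 = g/2 -> 1 + V <> 0 ->
  Nf m g z k V (-(k*V)) = k*m*V^2*Pq g z V/2.
Proof. intros Hk HV. 
  assert (Nf m g z k V (-(k*V)) = (1+V) * (Ff m g z V (-(k*V)) + k * Gf m g z V (-(k*V)))).
  { unfold Nf, Ff. field. auto. }
  rewrite H, F_line by auto. field. auto. Qed.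

Lemma E1_pos' k c z m : 1 <= k -> k <= 5/4 -> 0 <= (1+k)*c - k -> (1+k)*c - k <= 1 -> 1 <= m ->
  z*(2*k^2 - (2*k^2-2)*c) = c*(1-c) ->
  0 <= (2*k^2*(m+1)-2)/2*c^2 + 2*c*k - k^2*(1 + m*(2*k^2)*z).
Proof. intros. assert (Hc: c = (k + ((1+k)*c - k))/(1+k)) by (field; lra).
  set (u := (1+k)*c - k) in *. rewrite Hc in H4 |- *. apply E1_pos; auto. Qed.

Lemma E2_neg' k c z : 1 <= k -> k <= 5/4 -> 0 <= (1+k)*c - k -> (1+k)*c - k <= 1 ->
  z*(2*k^2 - (2*k^2-2)*c) = c*(1-c) ->
  (2*(2*k^2)-1)*c^2 - (3*(2*k^2)-2-(2*k^2)*z*((2*k^2)-2))*c*k + (((2*k^2)-1)+(2*k^2)*z*(3-(2*k^2)))*k^2 <= 0.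
Proof. intros. assert (Hc: c = (k + ((1+k)*c - k))/(1+k)) by (field; lra).
  set (u := (1+k)*c - k) in *. rewrite Hc in H3 |- *. apply (E2_neg k u z); auto. Qed.

Lemma div_neg_neg a b : a < 0 -> b < 0 -> a / b > 0.
Proof. intros. replace (a/b) with ((-a)/(-b)) by (field; lra). apply Rdiv_lt_0_compat; lra. Qed.

Lemma Nlim m g z k a c0 (C : R -> R) : filterlim C (at_right a) (locally c0) ->
  filterlim (fun V => Nf m g z k V (C V)) (at_right a) (locally (Nf m g z k a c0)).
Proof. intros Hc. unfold Nf, Gf, lam, a1, a2, a3. lim_tac Hc. Qed.
Lemma Glim m g z a c0 (C : R -> R) : filterlim C (at_right a) (locally c0) ->
  filterlim (fun V => Gf m g z V (C V)) (at_right a) (locally (Gf m g z a c0)).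
Proof. intros Hc. unfold Gf, lam. lim_tac Hc. Qed.

Lemma mul_pos_l a b : 0 < b -> 0 <= a*b -> 0 <= a.
Proof. intros. nra. Qed.
Lemma mul_npos_l a b : 0 < b -> a*b <= 0 -> a <= 0.
Proof. intros. nra. Qed.
Lemma mul_neg_l a b : 0 < b -> a*b < 0 -> a < 0.
Proof. intros. nra. Qed.
Lemma neg_pos_mul a b : a < 0 -> 0 < b -> a*b < 0.
Proof. intros. nra. Qed.

Theorem mainTheorem10 (m : nat) (g z : R) (C : R -> R) :
  (m = 1%nat \/ m = 2%nat) ->
  2 <= g <= 3 ->
  0 < z <= zM g ->
  is_solution (INR m) g z (V1g g) (Vend g z) (C1g g) C ->
  (forall V, V1g g < V < Vend g z -> C V > - (sqrt (g / 2) * V)) /\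
  C1g g >= - (sqrt (g / 2) * V1g g) /\
  (C1g g = - (sqrt (g / 2) * V1g g) <-> g = 2).
Proof.
  intros Hm Hg Hz [HC0 [Hlim Hode]].
  pose proof (setup g z Hg Hz) as [Hk2 [Hk1 [Hk5 [Hs [Hu0 [Hu1 [HzD [Hz8 Hc0]]]]]]]].
  set (k := sqrt (g/2)) in *. set (c := C8g g z) in *.
  set (mR := INR m) in *.
  assert (HmR: 1 <= mR <= 2) by (unfold mR; destruct Hm as [->| ->]; simpl; lra).
  assert (HVe: Vend g z = -(c/k)) by (unfold Vend; rewrite Hs; fold c; field; lra).
  assert (HV1: V1g g = -(2/(g+1))) by reflexivity.
  assert (HC1: C1g g = 2*k*sqrt(g-1)/(g+1)).
  { unfold C1g. f_equal. assert (H4: (2*k)^2 = 2*g) by (replace ((2*k)^2) with (4*k^2) by ring; lra).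
    replace (2*g*(g-1)) with ((2*k)^2*(g-1)) by (rewrite H4; ring).
    rewrite sqrt_mult by nra. rewrite sqrt_pow2 by lra. reflexivity. }
  assert (Hsq1: 1 <= sqrt (g-1)) by (pose proof (sqrt_le_1_alt 1 (g-1) ltac:(lra)) as Hq; rewrite sqrt_1 in Hq; exact Hq).
  assert (Hrhs: - (k * V1g g) = 2*k/(g+1)) by (rewrite HV1; field; lra).
  split; [| split].
  2:{ rewrite Hrhs, HC1. apply Rle_ge. apply Rmult_le_compat_r. apply Rlt_le, Rinv_0_lt_compat; lra. 
        replace (2*k) with (2*k*1) at 1 by ring. apply Rmult_le_compat_l; lra. }
  2:{ rewrite Hrhs, HC1. split.
      - intro H. assert (sqrt (g-1) = 1).
        { apply Rmult_eq_reg_l with (2*k/(g+1)). replace (2*k/(g+1) * sqrt (g-1)) with (2*k*sqrt(g-1)/(g+1)) by (field; lra). rewrite H. field. lra.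
          apply Rgt_not_eq. apply Rdiv_lt_0_compat; lra. }
        assert (g - 1 = 1). { rewrite <- (pow2_sqrt (g-1)) by lra. rewrite H0. ring. } lra.
      - intro H. rewrite H. replace (2-1) with 1 by ring. rewrite sqrt_1. field. }
  intros V0 HV0. rewrite HVe in HV0, Hode.
  set (V1 := V1g g) in *. set (Ve := -(c/k)) in *.
  assert (Hk0: 0 < k) by lra.
  assert (HVe0: Ve < 0). { unfold Ve. assert (0 < c/k) by (apply Rdiv_lt_0_compat; lra). lra. }
  assert (HV1m: -1 < V1) by (rewrite HV1; replace (2/(g+1)) with (1 - (g-1)/(g+1)) by (field; lra);
    assert (0 < (g-1)/(g+1)) by (apply Rdiv_lt_0_compat; lra); lra).
  assert (Hkk: 0 < k^2) by (clear - Hk1; nra).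
  assert (HBe: 0 <= Bq mR g z Ve).
  { pose proof (E1_pos' k c z mR Hk1 Hk5 Hu0 Hu1 (proj1 HmR)) as HE.
    assert (HzD': z*(2*k^2 - (2*k^2-2)*c) = c*(1-c)) by (rewrite Hk2; replace (2*(g/2)) with g by field; exact HzD).
    specialize (HE HzD').
    assert (Bq mR g z Ve * k^2 = (2*k^2*(mR+1)-2)/2*c^2 + 2*c*k - k^2*(1 + mR*(2*k^2)*z)).
    { unfold Bq, lam, Ve. replace g with (2*k^2) by lra. field. lra. }
    apply (mul_pos_l _ (k^2)); lra. }
  assert (HPe: Pq g z Ve <= 0).
  { pose proof (E2_neg' k c z Hk1 Hk5 Hu0 Hu1) as HE.
    assert (HzD': z*(2*k^2 - (2*k^2-2)*c) = c*(1-c)) by (rewrite Hk2; replace (2*(g/2)) with g by field; exact HzD).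
    specialize (HE HzD').
    assert (Pq g z Ve * k^2 = (2*(2*k^2)-1)*c^2 - (3*(2*k^2)-2-(2*k^2)*z*((2*k^2)-2))*c*k + (((2*k^2)-1)+(2*k^2)*z*(3-(2*k^2)))*k^2).
    { unfold Pq, Ve. replace g with (2*k^2) by lra. field. lra. }
    apply (mul_npos_l _ (k^2)); lra. }
  assert (HP1: Pq g z V1 < 0).
  { assert (Pq g z V1 * (g+1)^2 = (g^2-4*g+1)*((g-1) - z*g*(g+1))).
    { unfold Pq. rewrite HV1. field. lra. }
    assert (g^2-4*g+1 < 0) by (clear - Hg; nra).
    assert (0 < (g-1) - z*g*(g+1)) by (clear - Hg Hz8 Hz; nra).
    apply (mul_neg_l _ ((g+1)^2)). apply pow_lt; lra. rewrite H. apply neg_pos_mul; auto. }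
  assert (Hline: forall V, V1 <= V < Ve -> V < 0 /\ 0 < 1+V /\ 0 < Bq mR g z V /\ Pq g z V < 0).
  { intros V HV. split; [lra|]. split; [lra|]. split.
    - assert (Bq mR g z V - Bq mR g z Ve = (V - Ve)*((g*(mR+1)-2)/2*(V+Ve) - 2)) by (unfold Bq; ring).
      assert (0 < (g*(mR+1)-2)/2) by (clear - Hg HmR; nra).
      assert ((g*(mR+1)-2)/2*(V+Ve) - 2 < 0).
      { assert (0 < (g*(mR+1)-2)/2 * (-(V+Ve))) by (apply Rmult_lt_0_compat; lra). lra. }
      assert (0 < (Ve - V) * (-((g*(mR+1)-2)/2*(V+Ve) - 2))) by (apply Rmult_lt_0_compat; lra).
      lra.
    - assert (Pq g z V * (Ve - V1) = (Ve - V)*Pq g z V1 + (V - V1)*Pq g z Ve + (2*g-1)*(V-V1)*(V-Ve)*(Ve-V1)) by (unfold Pq; ring).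
      assert ((Ve - V)*(-Pq g z V1) > 0) by (apply Rmult_lt_0_compat; lra).
      assert ((V - V1)*(-Pq g z Ve) >= 0) by (apply Rle_ge, Rmult_le_pos; lra).
      assert ((2*g-1)*(V-V1)*(V-Ve)*(Ve-V1) <= 0).
      { replace ((2*g-1)*(V-V1)*(V-Ve)*(Ve-V1)) with (-((2*g-1)*((V-V1)*(Ve-V1))*(Ve-V))) by ring.
        assert (0 <= (2*g-1)*((V-V1)*(Ve-V1))*(Ve-V)) by (apply Rmult_le_pos; [apply Rmult_le_pos; [lra|apply Rmult_le_pos]|]; lra). lra. }
      assert (0 < Ve - V1) by lra. destruct (Rlt_or_le (Pq g z V) 0) as [|Hc]; [assumption|].
      assert (0 <= Pq g z V * (Ve - V1)) by (apply Rmult_le_pos; lra).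
      replace ((Ve - V)*(-Pq g z V1)) with (-((Ve - V)*Pq g z V1)) in H0 by ring.
      replace ((V - V1)*(-Pq g z Ve)) with (-((V - V1)*Pq g z Ve)) in H1 by ring.
      lra. }
  assert (HPhi: forall V, V1 <= V < Ve -> Ff mR g z V (-(k*V)) / Gf mR g z V (-(k*V)) + k > 0).
  { intros V HV. destruct (Hline V HV) as [Hv0 [Hv1 [HB HP]]].
    assert (HVB: V * Bq mR g z V < 0) by (apply neg_pos_mul; auto).
    rewrite N_id. 2: lra. 2: rewrite G_line by auto; lra.
    rewrite N_line by (auto; lra). rewrite G_line by auto.
    apply div_neg_neg.
    - assert (0 < k*mR*V^2) by (apply Rmult_lt_0_compat; [apply Rmult_lt_0_compat; lra| apply pow2_gt_0; lra]).
      assert (k*mR*V^2*Pq g z V < 0) by (rewrite Rmult_comm; apply neg_pos_mul; auto). lra.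
    - rewrite Rmult_comm. apply neg_pos_mul; auto. }
  set (h := fun V => C V + k*V).
  set (h' := fun V => Ff mR g z V (C V) / Gf mR g z V (C V) + k).
  assert (Hder: forall x, V1 < x < Ve -> derivable_pt_lim h x (h' x)).
  { intros x Hx. destruct (Hode x Hx) as [_ Hd]. unfold h, h'.
    replace (Ff mR g z x (C x) / Gf mR g z x (C x) + k) with (Ff mR g z x (C x) / Gf mR g z x (C x) + k*1) by ring.
    apply (derivable_pt_lim_plus C (fun V => k*V)). exact Hd.
    apply (derivable_pt_lim_scal id k x 1). apply derivable_pt_lim_id. }
  assert (Hhlim: filterlim h (at_right V1) (locally (C1g g + k*V1))).
  { unfold h. apply lim_plus. exact Hlim. apply lim_mult. apply lim_const. apply lim_id. }
  assert (HhV1: h V1 = C1g g + k*V1) by (unfold h; rewrite HC0; reflexivity).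
  cut (h V0 > 0). { unfold h. lra. }
  apply (barrier h h' V1 Ve); auto.
  - intros x Hx Hh0. unfold h'. assert (C x = -(k*x)) by (unfold h in Hh0; lra). rewrite H. apply HPhi. lra.
  - destruct (Req_dec g 2) as [Hg2|Hg2].
    +
      assert (HC1l: C1g g = -(k*V1)).
      { rewrite HC1. rewrite HV1. rewrite Hg2. replace (2-1) with 1 by ring. rewrite sqrt_1. field. }
      assert (HN1: Nf mR g z k V1 (C1g g) < 0).
      { rewrite HC1l, N_line by (auto; lra). destruct (Hline V1 ltac:(lra)) as [Hv0 [Hv1 [HB HP]]].
        assert (0 < k*mR*V1^2) by (apply Rmult_lt_0_compat; [apply Rmult_lt_0_compat; lra| apply pow2_gt_0; lra]).
        assert (k*mR*V1^2*Pq g z V1 < 0) by (rewrite Rmult_comm; apply neg_pos_mul; auto). lra. }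
      assert (HG1: Gf mR g z V1 (C1g g) < 0).
      { rewrite HC1l, G_line by auto. destruct (Hline V1 ltac:(lra)) as [Hv0 [Hv1 [HB HP]]]. apply neg_pos_mul; auto. }
      assert (HNl: filterlim (fun V => Nf mR g z k V (C V)) (at_right V1) (locally (Nf mR g z k V1 (C1g g)))).
      { apply Nlim; auto. }
      assert (HGl: filterlim (fun V => Gf mR g z V (C V)) (at_right V1) (locally (Gf mR g z V1 (C1g g)))).
      { apply Glim; auto. }
      destruct (lim_eps V1 _ _ HNl (- Nf mR g z k V1 (C1g g)) ltac:(lra)) as [e1 [He1 H1]].
      destruct (lim_eps V1 _ _ HGl (- Gf mR g z V1 (C1g g)) ltac:(lra)) as [e2 [He2 H2]].
      set (d0 := Rmin (Rmin e1 e2) (Ve - V1)).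
      assert (d0 <= Rmin e1 e2) by apply Rmin_l. assert (d0 <= Ve - V1) by apply Rmin_r.
      assert (Rmin e1 e2 <= e1) by apply Rmin_l. assert (Rmin e1 e2 <= e2) by apply Rmin_r.
      assert (0 < d0) by (apply Rmin_glb_lt; [apply Rmin_glb_lt|]; lra).
      exists d0. split; [lra|].
      apply (start_pos h h' V1 d0); auto.
      * intros x Hx. split. apply Hder. lra.
        specialize (H1 x ltac:(lra)). specialize (H2 x ltac:(lra)).
        apply Rabs_def2 in H1. apply Rabs_def2 in H2.
        unfold h'. rewrite N_id. 2: lra. 2: lra.
        apply div_neg_neg. lra. rewrite Rmult_comm. apply neg_pos_mul; lra.
      * intros eps Heps. destruct (lim_eps V1 _ _ Hhlim eps Heps) as [e [He He']].
        exists e. split; auto. intros x Hx. rewrite HhV1. apply He'. auto.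
      * rewrite HhV1, HC1l. ring.
    + assert (Hpos: 0 < C1g g + k*V1).
      { rewrite HC1. rewrite HV1.
        assert (1 < sqrt (g-1)).
        { destruct (Rle_lt_or_eq_dec _ _ Hsq1) as [|He]; auto. exfalso. apply Hg2.
          assert (g - 1 = 1). { rewrite <- (pow2_sqrt (g-1)) by lra. rewrite <- He. ring. } lra. }
        replace (2 * k * sqrt (g - 1) / (g + 1) + k * - (2 / (g + 1))) with (2*k*(sqrt (g-1) - 1)/(g+1)) by (field; lra).
        apply Rdiv_lt_0_compat; [apply Rmult_lt_0_compat; lra | lra]. }
      destruct (lim_eps V1 _ _ Hhlim _ Hpos) as [e [He He']].
      exists e. split; auto. intros x Hx. specialize (He' x Hx). apply Rabs_def2 in He'. lra.
Qed.
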